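(* Assume the setting below and suppose $\tau\le0$ and $|x_k^{(1)}|<a$. Let $q_k=\left\lceil\log_2\frac{(1+\tau)a}{|x_k^{(1)}|}\right\rceil$ (an integer which may be zero or negative). Then (with probability one) the step returned by the line search at iteration $k$ is $t_k=\min(1,1/2^{q_k-1})$.
   Context: Let $n\ge2$, $a\ge\sqrt{n-1}$, $f(x)=a|x^{(1)}|+\sum_{i=2}^n x^{(i)}$ on $\mathbb{R}^n$ ($x^{(i)}$ the $i$-th coordinate), $0<c_1<c_2<1$, and $\tau=c_1+\frac{(n-1)(c_1-1)}{a^2}$. The initial point $x_0$ is drawn from the normal distribution on $\mathbb{R}^n$ (independently of $a$), and $x_{k+1}=x_k+t_kd_k$, $d_k=-\nabla f(x_k)$, where $t_k$ is returned by the following Armijo–Wolfe bracketing line search: set $\alpha=0$, $\beta=+\infty$, $t=1$; repeat: if $A(t)$ fails set $\beta\leftarrow t$; else if $W(t)$ fails set $\alpha\leftarrow t$; else stop and return $t$; then if $\beta<+\infty$ set $t\leftarrow(\alpha+\beta)/2$, otherwise $t\leftarrow2\alpha$. Here $A(t)$: $f(x_k+td_k)\le f(x_k)+c_1t\nabla f(x_k)^Td_k$, and $W(t)$: $f$ is differentiable at $x_k+td_k$ and $\nabla f(x_k+td_k)^Td_k\ge c_2\nabla f(x_k)^Td_k$. All statements are understood to hold with probability one. *)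

(* Defs.v *)
From HB Require Import structures.
From mathcomp Require Import all_boot all_order all_algebra.
From mathcomp Require Import all_classical all_reals all_analysis.

Set Implicit Arguments.
Unset Strict Implicit.
Unset Printing Implicit Defensive.

Import Order.TTheory GRing.Theory Num.Theory.
Import numFieldNormedType.Exports.
Local Open Scope classical_set_scope.
Local Open Scope ring_scope.

Section Defs.
Variable R : realType.
Variable n : nat.

(* Coordinate x^(k+1) of x in R^n, written with 0-based index k
   (so [xcoord x 0] is the paper's x^(1)); equals 0 if k >= n. *)
Definition xcoord (x : 'rV[R]_n) (k : nat) : R :=
  \sum_(i < n | val i == k) x ord0 i.

Definition ftest (a : R) (x : 'rV[R]_n) : R :=
  a * `|xcoord x 0| + \sum_(i < n | val i != 0%N) x ord0 i.

Definition dotv (u v : 'rV[R]_n) : R := \sum_(i < n) u ord0 i * v ord0 i.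

Definition gradv (f : 'rV[R]_n -> R) (x : 'rV[R]_n) : 'rV[R]_n :=
  \row_i ('d f x (delta_mx ord0 i : 'rV[R]_n)).

Definition armijo (f : 'rV[R]_n -> R) (c1 : R) (x d : 'rV[R]_n) (t : R) : Prop :=
  f (x + t *: d) <= f x + c1 * t * dotv (gradv f x) d.

Definition wolfe (f : 'rV[R]_n -> R) (c2 : R) (x d : 'rV[R]_n) (t : R) : Prop :=
  differentiable f (x + t *: d) /\
  dotv (gradv f (x + t *: d)) d >= c2 * dotv (gradv f x) d.

(* State (alpha, beta, t) with beta = None meaning
   beta = +oo.  [ls_from f c1 c2 x d alpha beta t r] means: the line search,
   started from the state (alpha, beta, t), terminates (after finitely many
   steps) and returns r. *)
Definition ls_next (alpha : R) (beta : option R) : R :=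
  match beta with Some b => (alpha + b) / 2 | None => 2 * alpha end.

Inductive ls_from (f : 'rV[R]_n -> R) (c1 c2 : R) (x d : 'rV[R]_n) :
    R -> option R -> R -> R -> Prop :=
  | ls_stop alpha beta t :
      armijo f c1 x d t -> wolfe f c2 x d t -> ls_from f c1 c2 x d alpha beta t t
  | ls_failA alpha beta t r :
      ~ armijo f c1 x d t ->
      ls_from f c1 c2 x d alpha (Some t) (ls_next alpha (Some t)) r ->
      ls_from f c1 c2 x d alpha beta t r
  | ls_failW alpha beta t r :
      armijo f c1 x d t -> ~ wolfe f c2 x d t ->
      ls_from f c1 c2 x d t beta (ls_next t beta) r ->
      ls_from f c1 c2 x d alpha beta t r.

Definition line_search_returns (f : 'rV[R]_n -> R) (c1 c2 : R)
    (x d : 'rV[R]_n) (r : R) : Prop :=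
  ls_from f c1 c2 x d 0 None 1 r.

Definition gd_prefix (f : 'rV[R]_n -> R) (c1 c2 : R) (x0 : 'rV[R]_n)
    (xs : nat -> 'rV[R]_n) (ts : nat -> R) (k : nat) : Prop :=
  xs 0%N = x0 /\
  forall j, (j < k)%N ->
    line_search_returns f c1 c2 (xs j) (- gradv f (xs j)) (ts j) /\
    xs j.+1 = xs j + ts j *: (- gradv f (xs j)).

End Defs.

(* Mutual independence of a finite family of real random variables:
   product rule for the joint preimage of every family of Borel sets
   (taking B i = setT recovers every subfamily). *)
Definition mutually_independent {R : realType} {d} {T : measurableType d}
    (P : probability T R) (n : nat) (X : 'I_n -> {RV P >-> R}) : Prop :=
  forall B : 'I_n -> set R, (forall i, measurable (B i)) ->
    P [set w | forall i, B i (X i w)] = (\prod_(i < n) P (X i @^-1` B i))%E.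

(* Main.v *)
Require Import Defs.
From HB Require Import structures.
From mathcomp Require Import all_boot all_order all_algebra.
From mathcomp Require Import all_classical all_reals all_analysis.
From mathcomp Require Import ring lra zify.
Import Order.TTheory GRing.Theory Num.Theory.
Import numFieldNormedType.Exports.
Local Open Scope classical_set_scope.
Local Open Scope ring_scope.

Set Implicit Arguments.
Unset Strict Implicit.
Unset Printing Implicit Defensive.
Lemma normr_derivable (R : realType) (u : R) : u != 0 -> derivable (fun y : R => `|y|) u 1.
Proof.
move=> u0.
have h : {near u, (fun y : R => Num.sg u * y) =1 (fun y : R => `|y|)}.
  case: (ltrgt0P u) u0 => // [up|un] _.
  - near=> y; rewrite gtr0_sg // mul1r gtr0_norm //; near: y; exact: lt_nbhsr.
  - near=> y; rewrite ltr0_sg // mulN1r ltr0_norm //; near: y; exact: lt_nbhsl.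
apply: near_eq_derivable h _.
apply: derivableM; [exact: derivable_cst | exact: derivable_id].
Unshelve. all: by end_near. Qed.

Lemma normr_differentiable (R : realType) (u : R) : u != 0 -> differentiable (fun y : R => `|y|) u.
Proof. by move=> u0; apply/derivable1_diffP/normr_derivable. Qed.

Lemma ftestE (R : realType) n (a : R) (i0 : 'I_n) : val i0 = 0%N ->
  ftest a = fun x => a * `|x ord0 i0| + \sum_(i < n | val i != 0%N) x ord0 i.
Proof.
move=> h0; apply/funext => x; rewrite /ftest /xcoord (big_pred1 i0) //.
by move=> i /=; rewrite -h0; apply/eqP/eqP => [/val_inj|->].
Qed.

Lemma ftest_diff (R : realType) n (a : R) (i0 : 'I_n) (y : 'rV[R]_n) :
  val i0 = 0%N -> y ord0 i0 != 0 -> differentiable (ftest a) y.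
Proof.
move=> h0 y0; rewrite (ftestE a h0).
apply: differentiableD.
  have -> : (fun x : 'rV[R]_n => a * `|x ord0 i0|) =
            a *: ((fun u : R => `|u|) \o (fun x : 'rV[R]_n => x ord0 i0)) by [].
  apply: differentiableZ; apply: differentiable_comp.
    exact: differentiable_coord.
  exact: normr_differentiable.
have -> : (fun x : 'rV[R]_n => \sum_(i < n | val i != 0%N) x ord0 i) =
  \sum_(i < n) (fun x : 'rV[R]_n => if val i != 0%N then x ord0 i else 0).
  by rewrite fct_sumE; apply/funext => x; rewrite big_mkcond.
apply: differentiable_sum => i; case: (val i != 0%N).
  exact: differentiable_coord.
exact: differentiable_cst.
Qed.

Lemma abs_near (R : realType) (u h : R) : `|h| < `|u| ->
  `|h + u| = Num.sg u * (h + u).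
Proof.
have [up|un|->] := ltrgt0P u.
- rewrite gtr0_sg // mul1r => hl; rewrite gtr0_norm //.
  by move: hl; rewrite ltr_norml => /andP[h1 _]; rewrite -ltrBlDr sub0r.
- rewrite ltr0_sg // mulN1r => hl; rewrite ltr0_norm //.
  by move: hl; rewrite ltr_norml => /andP[_ h1]; rewrite -ltrBrDr sub0r.
by move=> /(le_lt_trans (normr_ge0 h)); rewrite ltxx.
Qed.

Lemma ftest_grad (R : realType) n (a : R) (i0 : 'I_n) (y : 'rV[R]_n) :
  val i0 = 0%N -> y ord0 i0 != 0 ->
  gradv (ftest a) y = \row_i (if val i == 0%N then a * Num.sg (y ord0 i0) else 1).
Proof.
move=> h0 y0; apply/rowP => i; rewrite !mxE -deriveE; last exact: (ftest_diff a h0 y0).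
set c := (if _ then _ else _).
have H : \forall h \near (0 : R)^',
   h^-1 *: (ftest a (h *: (delta_mx ord0 i : 'rV[R]_n) + y) - ftest a y) = c.
  near=> h.
  have hn0 : h != 0 by near: h; exact: nbhs_dnbhs_neq.
  have hs : `|h| < `|y ord0 i0| by near: h; apply: dnbhs0_lt; rewrite normr_gt0.
  rewrite (ftestE a h0) /c.
  have E j : (h *: (delta_mx ord0 i : 'rV[R]_n) + y) ord0 j = h * (j == i)%:R + y ord0 j.
    by rewrite !mxE eqxx.
  case: ifP => hi.
  - have ii : i = i0 by apply: val_inj; rewrite h0; exact/eqP.
    rewrite ii in E *.
    rewrite E eqxx mulr1.
    under eq_bigr => j hj do rewrite E.
    have -> : \sum_(j < n | val j != 0%N) (h * (j == i0)%:R + y ord0 j) =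
              \sum_(j < n | val j != 0%N) y ord0 j.
      apply: eq_bigr => j hj; have -> : (j == i0) = false.
        by apply/negbTE; apply: contra hj => /eqP ->; rewrite h0.
      by rewrite mulr0 add0r.
    rewrite abs_near // (normrEsg (y ord0 i0)).
    have -> : forall z : R, h^-1 *: z = h^-1 * z by [].
    by field.
  - have i0i : (i0 == i) = false.
      by apply/negbTE/eqP => e; move: hi; rewrite -e h0 eqxx.
    rewrite E i0i mulr0 add0r.
    under eq_bigr => j _ do rewrite E.
    rewrite big_split /=.
    have -> : \sum_(j < n | val j != 0%N) h * (j == i)%:R = h.
      rewrite (bigD1 i) /=; last by rewrite hi.
      rewrite eqxx mulr1 big1 ?addr0 // => j /andP[_ /negbTE ->]; by rewrite mulr0.
    have -> : forall z : R, h^-1 *: z = h^-1 * z by [].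
    by field.
rewrite /derive; apply: cvg_lim => //.
apply/cvgrPdist_lt => e e0; apply: filterS H => h ->; by rewrite subrr normr0.
Unshelve. all: by end_near. Qed.
Lemma ftest_nondiff (R : realType) n (a : R) (i0 : 'I_n) (y : 'rV[R]_n) :
  0 < a -> val i0 = 0%N -> y ord0 i0 = 0 -> ~ differentiable (ftest a) y.
Proof.
move=> a0 h0 y0 D.
have := @diff_derivable _ _ _ _ _ (delta_mx ord0 i0 : 'rV[R]_n) D.
rewrite /derivable.
set g := (fun h : R => _).
have gE h : g h = h^-1 * (a * `|h|).
  rewrite /g (ftestE a h0) /= !mxE !eqxx /= mulr1 y0 addr0 normr0 mulr0 add0r.
  have -> : \sum_(j < n | val j != 0%N) (h *: (delta_mx ord0 i0 : 'rV[R]_n) + y) ord0 j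
          = \sum_(j < n | val j != 0%N) y ord0 j.
    apply: eq_bigr => j hj; rewrite !mxE eqxx /=.
    have -> : (j == i0) = false by apply/negbTE/eqP => e; move: hj; rewrite e h0.
    by rewrite mulr0 add0r.
  by rewrite addrK.
move=> cg.
have Hr : lim (g @ 0^'+) = a.
  apply: cvg_lim => //; apply/cvgrPdist_lt => e e0.
  near=> h.
  have hp : 0 < h by near: h; exact: nbhs_right_gt.
  by rewrite gE (gtr0_norm hp) mulrCA mulVf ?mulr1 ?subrr ?normr0 // gt_eqF.
have Hl : lim (g @ 0^'-) = - a.
  apply: cvg_lim => //; apply/cvgrPdist_lt => e e0.
  near=> h.
  have hp : h < 0 by near: h; exact: nbhs_left_lt.
  by rewrite gE (ltr0_norm hp) !mulrN mulrCA mulVf ?mulr1 ?subrr ?normr0 // lt_eqF.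
have := cvg_at_rightE g 0 cg; have := cvg_at_leftE g 0 cg.
rewrite Hr Hl => -> /eqP; rewrite eq_sym -subr_eq0 opprK -mulr2n.
by rewrite mulrn_eq0 /= (gt_eqF a0).
Unshelve. all: by end_near. Qed.
Definition grow (R : realType) n (a sg : R) : 'rV[R]_n :=
  \row_(i < n) (if val i == 0%N then a * sg else 1).

Lemma pred0_eq n (i0 : 'I_n) : val i0 = 0%N -> forall i : 'I_n, (val i == 0%N) = (i == i0).
Proof. by move=> h0 i; rewrite -h0; apply/eqP/eqP => [/val_inj|->]. Qed.

Lemma sum_ne0 (R : realType) n (i0 : 'I_n) (F : 'I_n -> R) : val i0 = 0%N ->
  \sum_(i < n) F i = F i0 + \sum_(i < n | val i != 0%N) F i.
Proof.
move=> h0; rewrite (bigID (fun i : 'I_n => val i == 0%N)) /=.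
by rewrite (big_pred1 i0) //; exact: pred0_eq.
Qed.

Lemma count_ne0 (R : realType) n (i0 : 'I_n) : val i0 = 0%N ->
  \sum_(i < n | val i != 0%N) (1 : R) = (n.-1)%:R.
Proof.
move=> h0; have := sum_ne0 (fun _ => (1 : R)) h0.
rewrite sumr_const card_ord => E.
have n0 : (0 < n)%N by rewrite -h0 ltn_ord.
apply: (@addrI _ 1); rewrite -E -(prednK n0) mulrS.
by rewrite (prednK n0).
Qed.

Lemma dot_grow (R : realType) n (i0 : 'I_n) (a s1 s2 : R) : val i0 = 0%N ->
  dotv (grow n a s1) (- grow n a s2) = - (a ^+ 2 * (s1 * s2) + (n.-1)%:R).
Proof.
move=> h0; rewrite /dotv (sum_ne0 _ h0) !mxE h0 eqxx.
under eq_bigr => i hi do rewrite !mxE (negbTE hi) mulrN1.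
rewrite sumrN (count_ne0 R h0).
by ring.
Qed.

Lemma coord_step (R : realType) n (a sg t : R) (x : 'rV[R]_n) (j : 'I_n) :
  (x + t *: - grow n a sg) ord0 j = x ord0 j - t * (if val j == 0%N then a * sg else 1).
Proof. by rewrite !mxE mulrN. Qed.

Lemma S_step (R : realType) n (i0 : 'I_n) (a sg t : R) (x : 'rV[R]_n) : val i0 = 0%N ->
  \sum_(i < n | val i != 0%N) (x + t *: - grow n a sg) ord0 i =
  \sum_(i < n | val i != 0%N) x ord0 i - t * (n.-1)%:R.
Proof.
move=> h0; under eq_bigr => i hi do rewrite coord_step (negbTE hi) mulr1.
by rewrite sumrB sumr_const -(count_ne0 R h0) sumr_const mulr_natr.
Qed.

Lemma ftest_gradG (R : realType) n (a : R) (i0 : 'I_n) (y : 'rV[R]_n) :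
  val i0 = 0%N -> y ord0 i0 != 0 ->
  gradv (ftest a) y = grow n a (Num.sg (y ord0 i0)).
Proof. exact: ftest_grad. Qed.

Lemma K_pos (R : realType) (A N c : R) : 0 < A -> N <= A -> 0 < c -> c < 1 ->
  0 < A + c * A + N * (c - 1).
Proof.
move=> A0 NA c0 c1.
have h1 := mulr_gt0 c0 A0.
have h2 : N * (1 - c) <= A * (1 - c) by rewrite ler_wpM2r // subr_ge0 ltW.
lra.
Qed.

Lemma arm_alg (R : realType) (a c1 N1 s t S : R) :
  0 < a -> 0 < s -> 0 < t -> 0 <= N1 -> N1 <= a ^+ 2 -> 0 < c1 -> c1 < 1 ->
  s < t * a ->
  (a * `|s - t * a| + (S - t * N1) <= a * s + S + c1 * t * - (a ^+ 2 * 1 + N1) <->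
   t * ((1 + (c1 + N1 * (c1 - 1) / a ^+ 2)) * a / s) <= 2).
Proof.
move=> a0 s0 t0 N0 Na c10 c11 ts.
have a2 : 0 < a ^+ 2 by rewrite exprn_gt0.
have K0 := K_pos a2 Na c10 c11.
have tauE : 1 + (c1 + N1 * (c1 - 1) / a ^+ 2) =
   (a ^+ 2 + c1 * a ^+ 2 + N1 * (c1 - 1)) / a ^+ 2.
  by field; rewrite gt_eqF.
rewrite tauE.
set K := (a ^+ 2 + c1 * a ^+ 2 + N1 * (c1 - 1)) in K0 *.
have KE : K = a ^+ 2 + c1 * a ^+ 2 + N1 * (c1 - 1) by [].
clearbody K.
have rE : t * (K / a ^+ 2 * a / s) = (t * K) / (a * s).
  by field; rewrite !gt_eqF.
rewrite rE.
have as0 : 0 < a * s by rewrite mulr_gt0.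
rewrite ler_pdivrMr // (ltr0_norm); last by rewrite subr_lt0.
rewrite KE expr2; split => h; nra.
Qed.

Lemma rho_ts (R : realType) (a c1 N1 s t : R) :
  0 < a -> 0 < s -> 0 < t -> c1 + N1 * (c1 - 1) / a ^+ 2 <= 0 ->
  1 < t * ((1 + (c1 + N1 * (c1 - 1) / a ^+ 2)) * a / s) -> s < t * a.
Proof.
move=> a0 s0 t0 tau0; rewrite mulrA ltr_pdivlMr // mul1r => h.
apply: (lt_le_trans h); apply: ler_wpM2l; first exact: ltW.
have := mulr_le0_ge0 tau0 (ltW a0); lra.
Qed.

Lemma aw (R : realType) n (a c1 c2 : R) (i0 : 'I_n) (x : 'rV[R]_n) (t : R) :
  val i0 = 0%N -> 0 < a -> (n.-1)%:R <= a ^+ 2 -> 0 < c1 -> c1 < c2 -> c2 < 1 ->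
  c1 + (n.-1)%:R * (c1 - 1) / a ^+ 2 <= 0 ->
  x ord0 i0 != 0 ->
  0 < t -> `|x ord0 i0| < t * a ->
  (armijo (ftest a) c1 x (- gradv (ftest a) x) t <->
     t * ((1 + (c1 + (n.-1)%:R * (c1 - 1) / a ^+ 2)) * a / `|x ord0 i0|) <= 2) /\
  wolfe (ftest a) c2 x (- gradv (ftest a) x) t.
Proof.
move=> h0 a0 hN c10 c12 c21 tau0 x0 t0 ts.
have s0 : 0 < `|x ord0 i0| by rewrite normr_gt0.
have AE := @arm_alg R a c1 _ _ t (\sum_(i < n | val i != 0%N) x ord0 i)
   a0 s0 t0 (ler0n _ _) hN c10 (lt_trans c12 c21) ts.
have sg2 : Num.sg (x ord0 i0) * Num.sg (x ord0 i0) = 1 by rewrite -expr2 sqr_sg x0.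
have xE : x ord0 i0 = Num.sg (x ord0 i0) * `|x ord0 i0| by rewrite -numEsg.
have sgn : `|Num.sg (x ord0 i0)| = 1 by rewrite normr_sg x0.
have yE : (x + t *: - grow n a (Num.sg (x ord0 i0))) ord0 i0 =
    Num.sg (x ord0 i0) * (`|x ord0 i0| - t * a).
  by rewrite coord_step h0 eqxx {1}xE; ring.
rewrite /armijo /wolfe (ftest_gradG a h0 x0) (dot_grow _ _ _ h0) sg2.
split.
  rewrite (ftestE a h0) yE normrM sgn mul1r (S_step _ _ _ _ h0).
  by rewrite AE.
have y0 : (x + t *: - grow n a (Num.sg (x ord0 i0))) ord0 i0 != 0.
  by rewrite yE mulf_neq0 // ?sgr_eq0 // subr_eq0 (lt_eqF ts).
split; first exact: ftest_diff h0 y0.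
rewrite (ftest_gradG a h0 y0) (dot_grow _ _ _ h0) yE sgrM.
rewrite (ltr0_sg (x := _ - _)); last by rewrite subr_lt0.
have c20 : 0 < c2 by apply: lt_trans c12.
have h1 : 0 <= c2 * (a ^+ 2 * 1 + (n.-1)%:R).
  apply: mulr_ge0; first exact: ltW.
  by rewrite mulr1; apply: addr_ge0; [exact: sqr_ge0 | exact: ler0n].
have e : Num.sg (x ord0 i0) * -1 * Num.sg (x ord0 i0) = -1 by rewrite mulrN1 mulNr sg2.
rewrite sgr_id e; lra.
Qed.

Lemma ls_sound (R : realType) n (f : 'rV[R]_n -> R) c1 c2 x d al be t r :
  ls_from f c1 c2 x d al be t r -> armijo f c1 x d r /\ wolfe f c2 x d r.
Proof. by elim. Qed.

Lemma halving (R : realType) n (f : 'rV[R]_n -> R) c1 c2 x d (k : nat) :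
  (forall j, (j < k)%N -> ~ armijo f c1 x d ((2:R) ^+ j)^-1) ->
  armijo f c1 x d ((2:R) ^+ k)^-1 -> wolfe f c2 x d ((2:R) ^+ k)^-1 ->
  forall i j beta, (i + j = k)%N ->
    ls_from f c1 c2 x d 0 beta ((2:R) ^+ j)^-1 ((2:R) ^+ k)^-1.
Proof.
move=> HA A W; elim => [|i IH] j beta.
  by rewrite add0n => ->; exact: ls_stop.
move=> e; apply: ls_failA.
  by apply: HA; rewrite -e addSn ltnS leq_addl.
rewrite /ls_next add0r.
have -> : ((2:R) ^+ j)^-1 / 2 = ((2:R) ^+ j.+1)^-1 by rewrite exprS invfM mulrC.
by apply: IH; rewrite addnS -addSn.
Qed.

Lemma xcoordE (R : realType) n (i0 : 'I_n) (x : 'rV[R]_n) : val i0 = 0%N ->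
  xcoord x 0 = x ord0 i0.
Proof. by move=> h0; rewrite /xcoord (big_pred1 i0) //; exact: pred0_eq. Qed.

Unset Implicit Arguments.
Set Strict Implicit.

Theorem theorem4 (R : realType) (n : nat) (a c1 c2 : R)
  (d : measure_display) (T : measurableType d) (P : probability T R)
  (X : 'I_n -> {RV P >-> R}) :
  (2 <= n)%N ->
  Num.sqrt (n.-1)%:R <= a ->
  0 < c1 -> c1 < c2 -> c2 < 1 ->
  (forall i A, measurable A -> distribution P (X i) A = normal_prob 0 1 A) ->
  mutually_independent X ->
  let tau := c1 + (n.-1)%:R * (c1 - 1) / a ^+ 2 in
  tau <= 0 ->
  {ae P, forall w,
     let x0 : 'rV[R]_n := \row_i X i w in
     forall (k : nat) (xs : nat -> 'rV[R]_n) (ts : nat -> R),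
       gd_prefix (ftest a) c1 c2 x0 xs ts k ->
       `|xcoord (xs k) 0| < a ->
       let qk : int :=
         Num.ceil (ln ((1 + tau) * a / `|xcoord (xs k) 0|) / ln 2) in
       line_search_returns (ftest a) c1 c2 (xs k) (- gradv (ftest a) (xs k))
         (Num.min 1 ((2 : R) ^ (qk - 1))^-1)}.
Proof.
move=> n2 ha c10 c12 c21 Hdist Hind tau tau0.
have n0 : (0 < n)%N by apply: leq_trans n2.
have n1 : (1 <= n.-1)%N by lia.
pose i0 : 'I_n := Ordinal n0.
have h0 : val i0 = 0%N by [].
have N1ge : 1 <= (n.-1)%:R :> R by rewrite ler1n.
have sq0 : 0 < Num.sqrt (n.-1)%:R :> R by rewrite sqrtr_gt0 (lt_le_trans ltr01 N1ge).
have a0 : 0 < a := lt_le_trans sq0 ha.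
have hN : (n.-1)%:R <= a ^+ 2.
  by rewrite -(sqr_sqrtr (ler0n _ _)) ler_pXn2r // ?nnegrE ?sqrtr_ge0 ?(ltW a0).
rewrite /almost_everywhere /= /prop_near1 /nbhs /=.
exists (X i0 @^-1` [set 0]); split.
  - rewrite -[X i0 @^-1` _]setTI; exact: measurable_funP.
  - have := Hdist i0 [set 0] (measurable_set1 0).
    rewrite /distribution /pushforward => ->.
    apply: (@normal_prob_dominates R 0 1 [set 0]) => //.
    move=> A mA sA; apply: (subset_measure0 _ _ sA) => //.
    exact: lebesgue_measure_set1.
move=> w /= nQ; apply/eqP/negPn/negP => hw; apply: nQ.
move=> k xs ts [e0 hpre] hlt.
have xk0 : xs k ord0 i0 != 0.
  case: k hpre hlt => [|j] hpre _.
    by rewrite e0 mxE.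
  have [hls hxs] := hpre j (ltnSn j).
  have [_ [D _]] := ls_sound hls.
  rewrite hxs; apply/eqP => e; rewrite -hxs in e.
  by apply: (ftest_nondiff a0 h0 e); rewrite hxs.
rewrite !(xcoordE _ h0) in hlt *.
move: xk0 hlt; generalize (xs k) => x {hpre e0 xs ts k} x0 hlt.
have s0 : 0 < `|x ord0 i0| by rewrite normr_gt0.
have AW t := @aw R n a c1 c2 i0 x t h0 a0 hN c10 c12 c21 tau0 x0.
rewrite -/tau in AW.
set rho := (1 + tau) * a / `|x ord0 i0| in AW *.
have tau1 : 0 < 1 + tau.
  rewrite /tau.
  have a2 : 0 < a ^+ 2 by rewrite exprn_gt0.
  have := K_pos a2 hN c10 (lt_trans c12 c21).
  have -> : 1 + (c1 + (n.-1)%:R * (c1 - 1) / a ^+ 2) =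
     (a ^+ 2 + c1 * a ^+ 2 + (n.-1)%:R * (c1 - 1)) / a ^+ 2.
    by field; rewrite gt_eqF.
  by move=> K0; rewrite divr_gt0.
have rho0 : 0 < rho by rewrite /rho !mulr_gt0 ?invr_gt0.
have ln20 : 0 < ln (2 : R) by apply: ln_gt0; rewrite ltr1n.
rewrite /line_search_returns.
have [rho2|rho2] := leP rho 2.
  have q1 : Num.ceil (ln rho / ln 2) <= 1.
    rewrite ceil_le_int ler_pdivrMr // mul1r ler_ln ?posrE //.
  have -> : Num.min 1 ((2:R) ^ (Num.ceil (ln rho / ln 2) - 1))^-1 = 1.
    rewrite invr_expz.
    have hk : 0 <= - (Num.ceil (ln rho / ln 2) - 1) by rewrite oppr_ge0 subr_le0.
    by rewrite -(gez0_abs hk) -exprnP min_l // exprn_ege1 // ler1n.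
  have t1 : `|x ord0 i0| < 1 * a by rewrite mul1r.
  have [A W] := AW 1 ltr01 t1.
  by apply: ls_stop => //; apply/A; rewrite mul1r.
have q1 : 1 < Num.ceil (ln rho / ln 2).
  by rewrite ceil_gt_int ltr_pdivlMr // mul1r ltr_ln ?posrE.
set q := Num.ceil (ln rho / ln 2) in q1 *.
have hq : 0 <= q - 1 by rewrite subr_ge0 ltW.
set m := `|q - 1|%N.
have hm : (m%:Z) = q - 1 := gez0_abs hq.
have qE : q = m%:Z + 1 by rewrite hm subrK.
have [lo hi] : m%:R < ln rho / ln 2 /\ ln rho / ln 2 <= m%:R + 1.
  have := ceil_itv (ln rho / ln 2); rewrite -/q -hm qE rmorphD /=.
  by move=> /andP[-> ->].
have hlo : 2 ^+ m < rho.
  rewrite -ltr_ln ?posrE ?exprn_gt0 // lnXn // -[ln 2 *+ m]mulr_natr mulrC.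
  by rewrite -ltr_pdivlMr.
have hhi : rho <= 2 ^+ m.+1.
  rewrite -ler_ln ?posrE ?exprn_gt0 // lnXn // -[ln 2 *+ m.+1]mulr_natr mulrC.
  by rewrite -ler_pdivrMr //; apply: le_trans hi _; rewrite natr1.
have -> : Num.min 1 ((2:R) ^ (q - 1))^-1 = ((2:R) ^+ m)^-1.
  by rewrite -hm -exprnP min_r // invf_le1 ?exprn_gt0 // exprn_ege1 // ler1n.
have p2 : forall j, 0 < (2:R) ^+ j by move=> j; rewrite exprn_gt0.
have HA : forall j, (j < m)%N -> ~ armijo (ftest a) c1 x (- gradv (ftest a) x) ((2:R) ^+ j)^-1.
  move=> j jm.
  have tj0 : 0 < ((2:R) ^+ j)^-1 by rewrite invr_gt0.
  have htr : 2 < ((2:R) ^+ j)^-1 * rho.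
    rewrite mulrC ltr_pdivlMr // -exprS; apply: le_lt_trans hlo.
    by rewrite ler_eXn2l // ltr1n.
  have ts := rho_ts a0 s0 tj0 tau0 (lt_trans (ltr1n _ 2) htr).
  by move=> /(AW _ tj0 ts).1; rewrite leNgt htr.
have tm0 : 0 < ((2:R) ^+ m)^-1 by rewrite invr_gt0.
have htm : 1 < ((2:R) ^+ m)^-1 * rho by rewrite mulrC ltr_pdivlMr // mul1r.
have tsm := rho_ts a0 s0 tm0 tau0 htm.
have [A W] := AW _ tm0 tsm.
have Am : armijo (ftest a) c1 x (- gradv (ftest a) x) ((2:R) ^+ m)^-1.
  by apply/A; rewrite mulrC ler_pdivrMr // -exprS.
have := halving HA Am W None (addn0 m).
by rewrite expr0 invr1.
Qed.
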